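(* Let $k \ge 2$ and $2 \le n_1 \le n_2 \le \cdots \le n_k$ be integers, and let $K_{n_1,\dots,n_k}$ be the complete $k$-partite graph with parts of sizes $n_1,\dots,n_k$. (i) If $n_1$ is even, then $\mathrm{sg_e}(K_{n_1,\dots,n_k}) = \sum_{j=2}^k n_j + 1$ if $n_2 \in \{n_1, n_1+1\}$, and $\mathrm{sg_e}(K_{n_1,\dots,n_k}) = \sum_{j=2}^k n_j$ otherwise. (ii) If $n_1$ is odd, then $\mathrm{sg_e}(K_{n_1,\dots,n_k}) = \sum_{j=2}^k n_j + 2$ if $n_2 = n_1$, and $\mathrm{sg_e}(K_{n_1,\dots,n_k}) = \sum_{j=2}^k n_j$ otherwise.
   Context: All graphs are finite, simple and connected. A set $S \subseteq V(G)$ is a strong edge geodetic set of $G$ if one can assign to every unordered pair $\{u,v\}$ of distinct vertices of $S$ either one shortest $u,v$-path $P_{uv}$ in $G$ or no path, in such a way that every edge of $G$ lies on at least one of the assigned paths. The strong edge geodetic number $\mathrm{sg_e}(G)$ is the minimum cardinality of a strong edge geodetic set of $G$. *)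

(* Defs.v *)
From mathcomp Require Import all_boot.
Set Implicit Arguments. Unset Strict Implicit. Unset Printing Implicit Defensive.

Section Geodetic.
Variables (T : finType) (e : rel T).

Definition is_walk (u : T) (p : seq T) (v : T) : bool :=
  path e u p && (last u p == v).

Definition shortest_path (u : T) (p : seq T) (v : T) : Prop :=
  is_walk u p v /\ forall q, is_walk u q v -> size p <= size q.

Definition edge_on (u : T) (p : seq T) (x y : T) : bool :=
  has (fun ab : T * T => ((ab.1 == x) && (ab.2 == y)) || ((ab.1 == y) && (ab.2 == x)))
      (zip (u :: p) p).

(* S is a strong edge geodetic set: to each unordered pair {u,v} of distinct
   vertices of S (represented by the ordered pair with enum_rank u < enum_rank v)
   one assigns either one shortest u,v-path or none, such that every edge
   lies on one of the assigned paths. *)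
Definition strong_edge_geodetic (S : {set T}) : Prop :=
  exists P : T -> T -> option (seq T),
    (forall u v p, u \in S -> v \in S -> enum_rank u < enum_rank v ->
        P u v = Some p -> shortest_path u p v) /\
    (forall x y, e x y -> exists u v p,
        [/\ u \in S, v \in S, enum_rank u < enum_rank v, P u v = Some p
          & edge_on u p x y]).

Definition is_sge_number (N : nat) : Prop :=
  (exists S : {set T}, strong_edge_geodetic S /\ #|S| = N) /\
  (forall S : {set T}, strong_edge_geodetic S -> N <= #|S|).

End Geodetic.

(* Complete k-partite graph K_{n 0, ..., n (k-1)}: vertices are pairs
   (part i, index j < n i); two vertices are adjacent iff in different parts. *)
Definition multipartite_vertex (k : nat) (n : nat -> nat) : finType :=
  {i : 'I_k & 'I_(n i)}.

Definition multipartite_rel (k : nat) (n : nat -> nat) : rel (multipartite_vertex k n) :=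
  fun u v => tag u != tag v.

Arguments is_sge_number : clear implicits.
Arguments multipartite_rel : clear implicits.

(* Main.v *)
Require Import Defs.
From mathcomp Require Import all_boot zify.
Set Implicit Arguments. Unset Strict Implicit. Unset Printing Implicit Defensive.

Definition mp (m : nat) := if odd m then m.-1 else m.
Definition f (m : nat) := (mp m).-1.

Lemma mp_even m : ~~ odd (mp m).
Proof. rewrite /mp; case om: (odd m); last by rewrite om. by move: om; case: m => //= m; rewrite negbK. Qed.

Lemma mp_bounds m : m.-1 <= mp m <= m.
Proof. rewrite /mp; case: (odd m); lia. Qed.

Lemma f_mono m1 m2 : m1 <= m2 -> f m1 <= f m2.
Proof.
rewrite /f /mp => le; case o1: (odd m1); case o2: (odd m2); try lia.
Qed.

Lemma f_le m : f m <= m.-1.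
Proof. rewrite /f /mp; case: (odd m); lia. Qed.

Lemma formula_eq a b s : 2 <= a -> a <= b ->
  (if ~~ odd a then (if (b == a) || (b == a.+1) then s + 1 else s)
   else (if b == a then s + 2 else s)) = s + (a - minn a (f b)).
Proof.
move=> ha hab; rewrite /f /mp.
case oa: (odd a); case ob: (odd b); case: eqP => e1; case: eqP => e2; simpl; lia.
Qed.

Lemma lower_count m c : 2 <= m -> c * (m + odd m) <= m * m - m -> c <= f m.
Proof.
rewrite /f /mp => hm; case: (odd m) => /= h; nia.
Qed.

Definition Tval m a b : nat :=
  if odd m && (a == mp m) then b
  else if odd m && (b == mp m) then a
  else if a == (mp m).-1 then b else if b == (mp m).-1 then a
  else ((a + b) * (mp m)./2) %% (mp m).-1.

Definition Tfun m c a b : option nat :=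
  if (a != b) && (Tval m a b < c) then Some (Tval m a b) else None.

Lemma Tval_sym m a b : a != b -> Tval m a b = Tval m b a.
Proof.
rewrite /Tval => nab.
case: (odd m) => /=; last first.
  case: eqP => [ea|na]; case: eqP => [eb|nb] //; first by move: nab; rewrite ea eb eqxx.
  by rewrite addnC.
case: eqP => [ea|na]; case: eqP => [eb|nb] //; first by move: nab; rewrite ea eb eqxx.
case: eqP => [ea|na']; case: eqP => [eb|nb'] //; first by move: nab; rewrite ea eb eqxx.
by rewrite addnC.
Qed.

Lemma Tfun_sym m c a b : Tfun m c a b = Tfun m c b a.
Proof.
rewrite /Tfun; case: (eqVneq a b) => [->//|nab].
by rewrite (Tval_sym m nab).

Qed.


Lemma mp_ge2 m : 2 <= m -> 2 <= mp m.
Proof. move=> hm; have := mp_bounds m; have := mp_even m; lia. Qed.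

Lemma half_mp m : 2 <= m -> ((mp m)./2).*2 = ((mp m).-1).+1.
Proof.
move=> hm; have h2 := mp_ge2 hm; have ev := mp_even m.
rewrite -[in RHS](odd_double_half (mp m)) (negbTE ev) add0n; lia.
Qed.

Lemma dbl_mod m x : 2 <= m -> ((x.*2) * (mp m)./2) %% (mp m).-1 = x %% (mp m).-1.
Proof.
move=> hm; have H := half_mp hm.
have -> : x.*2 * (mp m)./2 = x * (mp m).-1 + x.
  by rewrite -doubleMl doubleMr H mulnS addnC.
by rewrite modnMDl.
Qed.

Lemma Tval_low m y z : y < mp m -> z < mp m ->
  Tval m y z = if y == (mp m).-1 then z else if z == (mp m).-1 then y
               else ((y + z) * (mp m)./2) %% (mp m).-1.
Proof.
move=> hy hz; rewrite /Tval.
have -> : (y == mp m) = false by apply/eqP; lia.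
have -> : (z == mp m) = false by apply/eqP; lia.
by rewrite !andbF.
Qed.

Lemma Texists m c y t : 2 <= m -> c <= f m -> y < m -> t < c ->
  exists z, [/\ z < m, z != y & Tfun m c y z = Some t].
Proof.
move=> hm hc hy ht.
have hb := mp_bounds m; have h2 := mp_ge2 hm.
have hq : t < (mp m).-1 by move: hc; rewrite /f; lia.
rewrite /Tfun.
case: (boolP (odd m && (y == mp m))) => [/andP [om /eqP ey]|nn].
  exists t; split; [lia | lia | ].
  have -> : Tval m y t = t by rewrite /Tval om ey eqxx.
  have -> : y != t by apply/eqP; lia.
  by rewrite ht.
have ym : y < mp m.
  move: nn hb hy; rewrite /mp; case: (odd m) => /=; last by lia.
  by move=> /eqP; lia.
suff [z [zq zy Tz]] : exists z, [/\ z < mp m, z != y & Tval m y z = t].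
  by exists z; split => //; [lia | rewrite eq_sym zy Tz ht].
case: (eqVneq y (mp m).-1) => [eq|nq].
  exists t; split; [lia|lia|]; rewrite Tval_low ?eq ?eqxx //; lia.
case: (eqVneq y t) => [eyt|nyt].
  exists (mp m).-1; split; [lia|by rewrite eq_sym|].
  rewrite Tval_low ?(negbTE nq) ?eqxx //; lia.
pose z := (t.*2 + ((mp m).-1 - y)) %% (mp m).-1.
have zq : z < (mp m).-1 by rewrite /z ltn_mod; lia.
have Tz : ((y + z) * (mp m)./2) %% (mp m).-1 = t.
  rewrite /z -modnMml modnDmr modnMml.
  have -> : y + (t.*2 + ((mp m).-1 - y)) = 1 * (mp m).-1 + t.*2 by lia.
  by rewrite -modnMml modnMDl modnMml dbl_mod // modn_small.
exists z; split; [lia| |].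
  apply/eqP => ezy; move: Tz; rewrite ezy addnn dbl_mod // modn_small; last lia.
  by move=> E; move: nyt; rewrite E eqxx.
rewrite Tval_low ?(negbTE nq); try lia.
have -> : (z == (mp m).-1) = false by apply/eqP; lia.
done.
Qed.

Section G.
Variables (k : nat) (n : nat -> nat).
Local Notation V := (multipartite_vertex k n).
Local Notation E := (multipartite_rel k n).

Lemma Eadj (u v : V) : E u v = (tag u != tag v).
Proof. by []. Qed.

Lemma edge_on_sym (u : V) p x y : edge_on u p x y = edge_on u p y x.
Proof. by rewrite /edge_on; apply: eq_has => ab /=; rewrite orbC. Qed.

Lemma edge_on1 (u v x y : V) :
  edge_on u [:: v] x y = ((u == x) && (v == y)) || ((u == y) && (v == x)).
Proof. by rewrite /edge_on /= orbF. Qed.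

Lemma edge_on2 (u w v x y : V) :
  edge_on u [:: w; v] x y = [|| ((u == x) && (w == y)) || ((u == y) && (w == x)),
                               ((w == x) && (v == y)) || ((w == y) && (v == x)) | false].
Proof. by []. Qed.

Lemma sp_cross (u v : V) : tag u != tag v -> shortest_path E u [:: v] v.
Proof.
move=> tuv; split; first by rewrite /is_walk /= Eadj tuv eqxx.
case=> [|a q] //; rewrite /is_walk => /andP [_ /eqP luv].
by move: tuv; rewrite /= in luv; rewrite luv eqxx.
Qed.

Lemma sp_same (u w v : V) : u != v -> tag u = tag v -> tag w != tag u ->
  shortest_path E u [:: w; v] v.
Proof.
move=> uv tuv twu; split.
  by rewrite /is_walk /= !Eadj eq_sym twu -tuv twu eqxx.
case=> [|a [|b q]] //; rewrite /is_walk.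
- by move=> /andP [_ /eqP luv]; move: uv; rewrite /= in luv; rewrite luv eqxx.
- move=> /andP [/andP [Eua _] /eqP luv]; rewrite /= in luv.
  by move: Eua; rewrite luv Eadj tuv eqxx.
Qed.

Lemma exists_other (x y u : V) : tag x != tag y -> exists w : V, tag w != tag u.
Proof.
move=> txy; case: (eqVneq (tag x) (tag u)) => [e|ne]; last by exists x.
by exists y; rewrite -e eq_sym.
Qed.

Lemma sp_shape (u v : V) p : u != v -> (exists w : V, tag w != tag u) ->
  shortest_path E u p v ->
  (tag u != tag v /\ p = [:: v]) \/ (tag u = tag v /\ exists w, p = [:: w; v]).
Proof.
move=> uv [w tw] [/andP [pth /eqP lst] mn].
case: (eqVneq (tag u) (tag v)) => [tuv|tuv].
  right; split => //.
  have := mn _ (proj1 (sp_same uv tuv tw)) => /=.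
  case: p pth lst {mn} => [|a [|b [|c q]]] //=.
  - by move=> _ luv; move: uv; rewrite luv eqxx.
  - by move=> /andP [Eua _] luv; move: Eua; rewrite Eadj luv tuv eqxx.
  - by move=> _ -> _; exists a.
left; split => //.
have := mn _ (proj1 (sp_cross tuv)) => /=.
case: p pth lst {mn} => [|a [|b q]] //=.
- by move=> _ luv; move: uv; rewrite luv eqxx.
- by move=> _ ->.
Qed.


Lemma rank_neq (u v : V) : enum_rank u < enum_rank v -> u != v.
Proof. by apply: contraTneq => ->; rewrite ltnn. Qed.

Lemma C_one_part S : strong_edge_geodetic E S ->
  forall x x' : V, x \notin S -> x' \notin S -> tag x = tag x'.
Proof.
move=> [P [HP1 HP2]] x x' xS x'S; apply/eqP; apply: contraT => txx.
have [u [v [p [uS vS ruv Puv eo]]]] := HP2 x x' txx.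
have sp := HP1 u v p uS vS ruv Puv.
have := sp_shape (rank_neq ruv) (exists_other u txx) sp.
have nx : (x == u) = false by apply: contraNF xS => /eqP ->.
have nx' : (x' == u) = false by apply: contraNF x'S => /eqP ->.
have mx : (x == v) = false by apply: contraNF xS => /eqP ->.
have mx' : (x' == v) = false by apply: contraNF x'S => /eqP ->.
case=> [[_ pe]|[_ [w pe]]]; move: eo; rewrite pe.
  by rewrite edge_on1 ![u == _]eq_sym ![v == _]eq_sym nx nx' mx mx'.
by rewrite edge_on2 ![u == _]eq_sym ![v == _]eq_sym nx nx' mx mx' !andbF.
Qed.


Lemma card_part (j : 'I_k) : #|[set y : V | tag y == j]| = n j.
Proof.
have -> : [set y : V | tag y == j] =
   (fun o : 'I_(n j) => Tagged (fun i : 'I_k => 'I_(n i)) o : V) @: setT.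
  apply/setP => y; rewrite inE; apply/idP/imsetP.
    by case: y => i o /= /eqP Ei; subst j; exists o.
  by case=> o _ ->.
rewrite card_imset ?cardsT ?card_ord //.
by move=> a b; apply: eq_from_Tagged.
Qed.

Lemma card_V : #|V| = \sum_(i < k) n i.
Proof.
rewrite card_tagged sumnE big_map big_enum /=.
by apply: eq_bigr => i _; rewrite card_ord.
Qed.

Lemma card_D2 (j : 'I_k) :
  #|[set yz : V * V | [&& tag yz.1 == j, tag yz.2 == j & yz.1 != yz.2]]|
  = n j * n j - n j.
Proof.
set Pj := [set y : V | tag y == j].
have -> : [set yz : V * V | [&& tag yz.1 == j, tag yz.2 == j & yz.1 != yz.2]]
   = setX Pj Pj :\: [set (y, y) | y in Pj].
  apply/setP => [[a b]]; rewrite !inE /=.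
  case: (eqVneq a b) => [<-|nab].
    case ta: (tag a == j); rewrite /= ?andbF //.
    rewrite andbT; apply: esym; apply: negbF; apply/imsetP; exists a => //.
    by rewrite inE.
  have -> : (a, b) \notin [set (y, y) | y in Pj].
    apply/negP => /imsetP [y _ [ea eb]]; by move: nab; rewrite ea eb eqxx.
  by case: (tag a == j); case: (tag b == j).
rewrite cardsD cardsX card_part.
have -> : setX Pj Pj :&: [set (y, y) | y in Pj] = [set (y, y) | y in Pj].
  apply/setIidPr/subsetP => yz /imsetP [y yP ->]; by rewrite in_setX yP.
rewrite card_imset ?card_part //.
by move=> a b /(congr1 fst).
Qed.

Lemma mem_sw (D : {set V * V}) (a b : V) :
  ((a, b) \in (fun yz : V * V => (yz.2, yz.1)) @: D) = ((b, a) \in D).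
Proof.
apply/imsetP/idP => [[[c d] cd /= [-> ->]] //|bD].
by exists (b, a).
Qed.

Lemma card_Dlt (j : 'I_k) :
  2 * #|[set yz : V * V | [&& tag yz.1 == j, tag yz.2 == j & enum_rank yz.1 < enum_rank yz.2]]|
  = n j * n j - n j.
Proof.
set D := [set yz : V * V | _].
pose sw := fun yz : V * V => (yz.2, yz.1).
have swK : involutive sw by case.
rewrite -card_D2.
have -> : [set yz : V * V | [&& tag yz.1 == j, tag yz.2 == j & yz.1 != yz.2]]
   = D :|: sw @: D.
  apply/setP => [[a b]]; rewrite !inE /=.
  rewrite mem_sw.
  rewrite !inE /=.
  case: (eqVneq a b) => [<-|nab]; first by rewrite !ltnn !andbF.
  case: ltngtP => [_|_|e]; rewrite /= ?andbF ?orbF ?andbT.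
  - by case: (tag a == j); case: (tag b == j).
  - by case: (tag a == j); case: (tag b == j).
  - by move: nab; rewrite (enum_rank_inj (val_inj e)) eqxx.
rewrite (cardsU D (sw @: D)) card_imset; last exact: inv_inj.
have -> : D :&: sw @: D = set0.
  apply/setP => [[a b]]; rewrite !inE.
  rewrite mem_sw.
  rewrite !inE /=; case: ltngtP; rewrite ?andbF //.
by rewrite cards0 subn0 mul2n addnn.
Qed.


Lemma key S (j : 'I_k) : strong_edge_geodetic E S ->
  (forall x : V, x \notin S -> tag x != j) -> 2 <= n j -> #|~: S| <= f (n j).
Proof.
move=> [P [HP1 HP2]] hC hnj.
pose g (o : option (seq V)) (d : V) := if o is Some (w :: _) then w else d.
pose mid (yz : V * V) := g (P yz.1 yz.2) yz.1.
set D := [set yz : V * V | [&& tag yz.1 == j, tag yz.2 == j & enum_rank yz.1 < enum_rank yz.2]].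
pose Ex x := [set yz in D | mid yz == x].
have cover : forall x y : V, x \notin S -> tag y == j ->
    exists2 yz, yz \in Ex x & (yz.1 == y) || (yz.2 == y).
  move=> x y xS ty.
  have txy : tag x != tag y by rewrite (eqP ty); exact: hC.
  have [u [v [p [uS vS ruv Puv eo]]]] := HP2 x y txy.
  have sp := HP1 u v p uS vS ruv Puv.
  have nx : (x == u) = false by apply: contraNF xS => /eqP ->.
  have mx : (x == v) = false by apply: contraNF xS => /eqP ->.
  case: (sp_shape (rank_neq ruv) (exists_other u txy) sp) => [[_ pe]|[tuv [w pe]]];
    move: eo; rewrite pe.
    by rewrite edge_on1 ![u == _]eq_sym ![v == _]eq_sym nx mx !andbF.
  rewrite edge_on2 ![u == _]eq_sym ![v == _]eq_sym nx mx /= orbF => eo.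
  have wx : w = x by move: eo; case: (w =P x) => //; rewrite !andbF.
  have yuv : (u == y) || (v == y).
    by move: eo; rewrite wx eqxx andbF orbF andbT ![y == _]eq_sym.
  exists (u, v) => //.
  have tu : tag u == j.
    by case/orP: yuv => /eqP e; [rewrite e | rewrite tuv e].
  by rewrite !inE /= tu -tuv tu ruv /= /mid /g /= Puv pe wx eqxx.

have lowEx : forall x, x \notin S -> n j + odd (n j) <= 2 * #|Ex x|.
  move=> x xS.
  have sub : [set y : V | tag y == j] \subset (fst @: Ex x) :|: (snd @: Ex x).
    apply/subsetP => y; rewrite inE => ty.
    have [[a b] ab /orP [] /eqP /= e] := cover x y xS ty; subst; rewrite inE.
      by apply/orP; left; apply/imsetP; exists (y, b).
    by apply/orP; right; apply/imsetP; exists (a, y).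
  have := subset_leq_card sub; rewrite card_part => le1.
  have le2 := (leq_card_setU (fst @: Ex x) (snd @: Ex x)).1.
  have le3 := leq_imset_card fst (Ex x).
  have le4 := leq_imset_card snd (Ex x).
  suff: n j <= 2 * #|Ex x| by lia.
  lia.
have sumEx : \sum_(x in ~: S) #|Ex x| <= #|D|.
  have -> : \sum_(x in ~: S) #|Ex x| = #|[set yz in D | mid yz \in ~: S]|.
    rewrite -sum1_card (partition_big mid (mem (~: S))) /=; last first.
      by move=> yz; rewrite inE => /andP [].
    apply: eq_bigr => x xS; rewrite -sum1_card; apply: eq_bigl => yz.
    rewrite !inE; case: (eqVneq (mid yz) x) => [->|]; rewrite ?andbF ?andbT //.
    by move: xS; rewrite inE => ->; rewrite andbT.
  by apply: subset_leq_card; apply/subsetP => yz; rewrite inE => /andP [].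
have := card_Dlt j; rewrite -/D => cD.
apply: lower_count => //.
have : \sum_(x in ~: S) (n j + odd (n j)) <= \sum_(x in ~: S) 2 * #|Ex x|.
  by apply: leq_sum => x; rewrite inE; exact: lowEx.
rewrite sum_nat_const -big_distrr /=.
move=> h; rewrite -cD; apply: (leq_trans h); by rewrite leq_mul2l sumEx orbT.
Qed.


Lemma n_mono (hmono : forall i, i.+1 < k -> n i <= n i.+1) i j :
  i <= j -> j < k -> n i <= n j.
Proof.
move=> ij; elim: j ij => [|j IH]; first by rewrite leqn0 => /eqP ->.
rewrite leq_eqVlt => /orP [/eqP -> //|ij] jk.
by apply: (leq_trans (IH ij (ltnW jk))); apply: hmono.
Qed.

Lemma C_bound (hk : 2 <= k) (hn0 : 2 <= n 0)
  (hmono : forall i, i.+1 < k -> n i <= n i.+1) S :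
  strong_edge_geodetic E S -> #|~: S| <= minn (n 0) (f (n 1)).
Proof.
move=> sg.
have hm := n_mono hmono.
case: (set_0Vmem (~: S)) => [->|[x0 x0C]]; first by rewrite cards0.
have allC : forall x : V, x \notin S -> tag x = tag x0.
  move=> x xS; apply: (C_one_part sg) => //; by rewrite -in_setC.
have k0 : 0 < k by lia.
have n01 : n 0 <= n 1 by apply: hm.
rewrite leq_min.
case: (eqVneq (val (tag x0)) 0) => [t0|t0].
  have leP : #|~: S| <= n 0.
    rewrite -t0 -card_part; apply: subset_leq_card; apply/subsetP => x.
    by rewrite !inE => xS; rewrite (allC x xS).
  rewrite leP /=.
  pose j1 : 'I_k := Ordinal hk.
  apply: (key sg (j := j1)); last by rewrite /=; lia.
  move=> x xS; rewrite (allC x xS); apply/eqP => e.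
  by move: t0; rewrite e.
pose i0 : 'I_k := Ordinal k0.
have := key sg (j := i0).
have h1 : (forall x : V, x \notin S -> tag x != i0).
  move=> x xS; rewrite (allC x xS); apply/eqP => e.
  by move: t0; rewrite e eqxx.
move=> /(_ h1 hn0) /= le.
have := f_le (n 0); have := f_mono n01.
lia.
Qed.


Lemma card_lt_ord m c : c <= m -> #|[set o : 'I_m | o < c]| = c.
Proof.
move=> hc.
have -> : [set o : 'I_m | o < c] = (widen_ord hc) @: setT.
  apply/setP => o; rewrite inE; apply/idP/imsetP => [lt|[i _ ->]].
    by exists (Ordinal lt) => //; apply: val_inj.
  exact: (ltn_ord i).
rewrite card_imset ?cardsT ?card_ord //.
by move=> a b /(congr1 val) /= e; apply: val_inj.
Qed.

Lemma construct (hk : 2 <= k) (hn0 : 2 <= n 0)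
  (hmono : forall i, i.+1 < k -> n i <= n i.+1) :
  exists S : {set V}, strong_edge_geodetic E S /\ #|~: S| = minn (n 0) (f (n 1)).
Proof.
have hm := n_mono hmono.
set c := minn (n 0) (f (n 1)).
have k0 : 0 < k by lia.
pose i0 : 'I_k := Ordinal k0.
have h0 : 0 < n i0 by rewrite /=; lia.
pose cv (t : nat) : V := Tagged (fun i : 'I_k => 'I_(n i)) (insubd (Ordinal h0) t).
pose C := [set x : V | (tag x == i0) && (val (tagged x) < c)].
have cv_eq : forall x, x \in C -> cv (val (tagged x)) = x.
  case=> i o; rewrite inE /= => /andP [/eqP Ei _].
  move: o; rewrite Ei => o.
  apply/eqP; rewrite eq_Tagged; apply/eqP/val_inj => /=.
  by rewrite val_insubd ltn_ord.
exists (~: C); rewrite setCK; split; last first.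
  have -> : C = (fun o : 'I_(n i0) => Tagged (fun i : 'I_k => 'I_(n i)) o : V)
                  @: [set o : 'I_(n i0) | o < c].
    apply/setP => x; rewrite inE; apply/idP/imsetP.
      case: x => i o /= /andP [/eqP Ei].
      move: o; rewrite Ei => o lt; exists o => //.
      by rewrite inE.
    case=> o; rewrite inE => oc ->. by apply/andP; split.
  rewrite card_imset; last by move=> a b; apply: eq_from_Tagged.
  by apply: card_lt_ord; rewrite /c /=; exact: geq_minl.
pose P (u v : V) : option (seq V) :=
  if tag u != tag v then Some [:: v]
  else if tag u == i0 then None
  else if Tfun (n (tag u)) c (val (tagged u)) (val (tagged v)) is Some t
       then Some [:: cv t; v] else None.
exists P; split.
  move=> u v p uS vS ruv; rewrite /P.
  case: ifP => tuv; first by case=> <-; exact: sp_cross.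
  case: ifP => // tu0.
  case: Tfun => [t|] // [<-].
  apply: sp_same; first exact: rank_neq.
    by apply/eqP; rewrite -(negbK (tag u == tag v)) tuv.
  by rewrite /= eq_sym tu0.
have main : forall x y : V, tag x != tag y -> y \in ~: C ->
    exists u v p, [/\ u \in ~: C, v \in ~: C, enum_rank u < enum_rank v,
                      P u v = Some p & edge_on u p x y].
  move=> x y txy yS.
  have xy : x != y by apply: contraNneq txy => ->.
  have rxy : (enum_rank x != enum_rank y) by apply: contra xy => /eqP /enum_rank_inj ->.
  case: (boolP (x \in C)) => xC; last first.
    rewrite -in_setC in xC.
    case: (ltngtP (enum_rank x) (enum_rank y)) => [lt|gt|e].
    - exists x, y, [:: y]; split => //; first by rewrite /P txy.
      by rewrite edge_on1 !eqxx.
    - exists y, x, [:: x]; split => //; first by rewrite /P eq_sym txy.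
      by rewrite edge_on1 !eqxx orbT.
    - by move: rxy; rewrite (val_inj e) eqxx.
  have tx : tag x = i0 by move: xC; rewrite inE => /andP [/eqP].
  have tlt : val (tagged x) < c by move: xC; rewrite inE => /andP [].
  have cvx := cv_eq x xC.
  set t := val (tagged x) in tlt cvx.
  have ty0 : tag y != i0 by rewrite -tx eq_sym.
  have j1 : 1 <= val (tag y).
    rewrite lt0n; apply: contra ty0 => /eqP e; apply/eqP/val_inj => /=; exact: e.
  have hnj : 2 <= n (tag y) by apply: leq_trans hn0 (hm _ _ (leq0n _) (ltn_ord _)).
  have hcj : c <= f (n (tag y)).
    apply: (leq_trans (geq_minr _ _)); apply: f_mono; apply: hm => //; exact: ltn_ord.
  have [zi [zn zy Tz]] := Texists hnj hcj (ltn_ord (tagged y)) tlt.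
  pose z : V := Tagged (fun i : 'I_k => 'I_(n i)) (Ordinal zn : 'I_(n (tag y))).
  have zS : z \in ~: C by rewrite !inE /= negb_and ty0.
  have yz : y != z by apply: contra zy => /eqP e; rewrite e.
  have ryz : enum_rank y != enum_rank z by apply: contra yz => /eqP /enum_rank_inj ->.
  case: (ltngtP (enum_rank y) (enum_rank z)) => [lt|gt|e].
  - exists y, z, [:: cv t; z]; split => //.
      by rewrite /P /= eqxx /= (negbTE ty0) Tz.
    by rewrite edge_on2 cvx !eqxx /= orbT.
  - exists z, y, [:: cv t; y]; split => //.
      by rewrite /P /= eqxx /= (negbTE ty0) Tfun_sym Tz.
    by rewrite edge_on2 cvx !eqxx /= orbT.
  - by move: ryz; rewrite (val_inj e) eqxx.
move=> x y txy.
case: (boolP (y \in ~: C)) => yS; first exact: main.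
have xS : x \in ~: C.
  rewrite inE; apply: contra txy => xC.
  by move: yS xC; rewrite !inE negbK => /andP [/eqP e1 _] /andP [/eqP e2 _]; rewrite e1 e2.
have [u [v [p [uS vS ruv Puv eo]]]] := main y x ltac:(by rewrite eq_sym) xS.
by exists u, v, p; split => //; rewrite edge_on_sym.
Qed.

End G.

Theorem mainTheorem7 (k : nat) (n : nat -> nat)
  (hk : 2 <= k) (hn0 : 2 <= n 0)
  (hmono : forall i, i.+1 < k -> n i <= n i.+1) :
  is_sge_number (multipartite_vertex k n) (multipartite_rel k n)
    (if ~~ odd (n 0) then
       (if (n 1 == n 0) || (n 1 == (n 0).+1)
        then \sum_(1 <= j < k) n j + 1 else \sum_(1 <= j < k) n j)
     else
       (if n 1 == n 0 then \sum_(1 <= j < k) n j + 2 else \sum_(1 <= j < k) n j)).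
Proof.
rewrite (formula_eq _ hn0 (hmono 0 hk)).
have tot : #|multipartite_vertex k n| = n 0 + \sum_(1 <= j < k) n j.
  rewrite card_V -(big_mkord xpredT n) (big_ltn (n := k)) //; lia.
have le0 : minn (n 0) (f (n 1)) <= n 0 by apply: geq_minl.
split.
  have [S [sg cC]] := construct hk hn0 hmono.
  exists S; split => //.
  rewrite cardsCs cC tot; lia.
move=> S sg; have h := C_bound hk hn0 hmono sg.
rewrite [#|S|]cardsCs tot; lia.
Qed.
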